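(* Let $(X,d)$ be a compact metric space and $f_{1,\infty}$ a sequence of continuous self-maps of $X$. Then $(X,f_{1,\infty})$ is weakly mixing of all orders if and only if the induced system $(\mathcal{M}(X),\widetilde{f}_{1,\infty})$ is weakly mixing of all orders.
   Context: For $f_{1,\infty}=\{f_n\}_{n\ge1}$ write $f_1^n=f_n\circ\cdots\circ f_1$. $\mathcal{M}(X)$ is the space of Borel probability measures on $X$ with the weak$^*$ topology, and $\widetilde{f}_1^n(\mu)(A)=\mu((f_1^n)^{-1}(A))$ for Borel $A$. A non-autonomous system $(Y,g_{1,\infty})$ is weakly mixing of order $m$ ($m\ge2$) if for any non-empty open sets $U_1,\dots,U_m,V_1,\dots,V_m\subseteq Y$ there is $n\in\mathbb{N}$ with $g_1^n(U_i)\cap V_i\neq\emptyset$ for all $1\le i\le m$; it is weakly mixing of all orders if this holds for every $m\ge2$. *)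

(* Defs.v *)
From HB Require Import structures.
From mathcomp Require Import all_boot all_order all_algebra.
From mathcomp Require Import all_classical all_reals all_analysis.
Set Implicit Arguments. Unset Strict Implicit. Unset Printing Implicit Defensive.
Import Order.TTheory GRing.Theory Num.Theory.
Import numFieldNormedType.Exports.
Local Open Scope classical_set_scope.
Local Open Scope ring_scope.

(** Non-autonomous composition: [fcomp f n = f n \o ... \o f 1]
    (the sequence is indexed from 1; [f 0] is never used);
    [fcomp f 0 = id]. *)
Fixpoint fcomp {X : Type} (f : nat -> X -> X) (n : nat) : X -> X :=
  match n with
  | 0 => id
  | k.+1 => f k.+1 \o fcomp f k
  end.

(** Generic weak mixing of order [m] for a non-autonomous system on [Y],
    given its family of open sets [op] and the image maps
    [img n U = g_1^n (U)]. *)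
Definition weakly_mixing_order {Y : Type} (op : set (set Y))
  (img : nat -> set Y -> set Y) (m : nat) : Prop :=
  forall U V : 'I_m -> set Y,
    (forall i, op (U i) /\ U i !=set0) ->
    (forall i, op (V i) /\ V i !=set0) ->
    exists n : nat, (0 < n)%N /\ forall i, img n (U i) `&` V i !=set0.

Definition weakly_mixing_all_orders {Y : Type} (op : set (set Y))
  (img : nat -> set Y -> set Y) : Prop :=
  forall m : nat, (2 <= m)%N -> weakly_mixing_order op img m.

Section MX.
Context {R : realType} {X : pseudoPMetricType R}.

Definition borelX := g_sigma_algebraType (@open X).

Definition PM := probability borelX R.

Definition weak_star_open (W : set PM) : Prop :=
  forall mu : PM, W mu ->
    exists (k : nat) (g : 'I_k -> X -> R) (e : R),
      0 < e /\ (forall i, continuous (g i)) /\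
      (forall nu : PM,
         (forall i, `| (\int[nu]_x g i x) - (\int[mu]_x g i x) | < e) ->
         W nu).

Definition induced_img (f : nat -> X -> X) (n : nat) (U : set PM) : set PM :=
  [set nu | exists2 mu : PM, U mu &
     forall A : set borelX, measurable A ->
       nu A = mu (fcomp f n @^-1` A)].

End MX.

(* Main.v *)
Require Import Defs.
From HB Require Import structures.
From mathcomp Require Import all_boot all_order all_algebra.
From mathcomp Require Import all_classical all_reals all_analysis.
From mathcomp Require Import measurable_realfun lra.
Set Implicit Arguments. Unset Strict Implicit. Unset Printing Implicit Defensive.
Import Order.TTheory GRing.Theory Num.Theory.
Import numFieldNormedType.Exports.
Local Open Scope classical_set_scope.
Local Open Scope ring_scope.

Section Infra.
Variables (R : realType) (X : pseudoPMetricType R).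
Local Notation T := (@borelX R X).

Lemma open_measT (U : set X) : open U -> measurable (U : set T).
Proof. by move=> oU; apply: sub_sigma_algebra. Qed.

Lemma cont_measT (g : X -> R) : continuous g -> measurable_fun [set: T] (g : T -> R).
Proof.
move=> /continuousP cg.
apply: (measurability _ (measurable_realfun.RGenOpens.measurableE R)).
move=> _ [_ [a [b ->] <-]]; rewrite setTI.
apply: open_measT; apply: cg; exact: interval_open.
Qed.

Lemma bnd_of_le (g : T -> R) (M : R) (A : set T) :
  (forall x, `|g x| <= M) -> [bounded g x | x in A].
Proof.
move=> gM; exists M; split; first by rewrite num_real.
by move=> N MN x _ /=; apply: le_trans (gM x) (ltW MN).
Qed.

Lemma cont_bnd (g : X -> R) : compact [set: X] -> continuous g ->
  exists M : R, forall x, `|g x| <= M.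
Proof.
move=> cX cg.
have cI : compact (g @` [set: X]).
  by apply: continuous_compact => //; exact: continuous_subspaceT.
have /compact_bounded [M [_ HM]] := cI.
exists (M + 1) => x; apply: (HM (M + 1)); first by rewrite ltrDl.
by exists x.
Qed.

Lemma cont_int (mu : {measure set T -> \bar R}) (g : X -> R) :
  compact [set: X] -> continuous g -> (mu [set: T] < +oo)%E ->
  mu.-integrable [set: T] (EFin \o (g : T -> R)).
Proof.
move=> cX cg fin; have [M HM] := cont_bnd cX cg.
apply: measurable_bounded_integrable => //; first exact: cont_measT.
exact: bnd_of_le HM.
Qed.

Definition nnabs (r : R) : {nonneg R} := NngNum (normr_ge0 r).

Definition wm (w : nat -> R) (a : nat -> T) : {measure set T -> \bar R}^nat :=
  fun k => mscale (nnabs (w k)) \d_(a k).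

Lemma wmE w a k A : wm w a k A = (`|w k|%:E * \d_(a k) A)%E.
Proof. by []. Qed.

Lemma wsumE w a J A : msum (wm w a) J A = (\sum_(k < J) `|w k|%:E * \d_(a k) A)%E.
Proof. by []. Qed.

Lemma wsum_int_ge0 w a J (F : T -> \bar R) : measurable_fun [set: T] F ->
  (forall x, (0 <= F x)%E) ->
  (\int[msum (wm w a) J]_x F x = \sum_(k < J) `|w k|%:E * F (a k))%E.
Proof.
move=> mF F0; rewrite ge0_integral_measure_sum //; apply: eq_bigr => k _.
rewrite /wm ge0_integral_mscale //= integral_dirac // diracT mul1e //.
Qed.

Lemma wsum_int w a J (g : T -> R) : measurable_fun [set: T] g ->
  (\int[msum (wm w a) J]_x (g x)%:E = (\sum_(k < J) `|w k| * g (a k))%:E)%E.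
Proof.
move=> mg.
have mF : measurable_fun [set: T] (EFin \o g) by exact/measurable_EFinP.
rewrite (_ : (fun x => (g x)%:E) = EFin \o g) // integralE funerpos funerneg.
rewrite !wsum_int_ge0 //; last 4 first.
- exact/measurable_EFinP/measurable_funrneg.
- by move=> x /=; rewrite lee_fin funrneg_ge0.
- exact/measurable_EFinP/measurable_funrpos.
- by move=> x /=; rewrite lee_fin funrpos_ge0.
rewrite /=; under eq_bigr do rewrite -EFinM.
under [X in (_ - X)%E]eq_bigr do rewrite -EFinM.
rewrite !sumEFin -EFinB -sumrB; congr EFin; apply: eq_bigr => k _.
by rewrite -mulrBr -[in RHS](funrposBneg g).
Qed.

Definition wprob (w : nat -> R) (a : nat -> T) J : PM := mnormalize (msum (wm w a) J) \d_point.

Lemma wsumT (w : nat -> R) (a : nat -> T) J : msum (wm w a) J [set: T] = ((\sum_(k < J) `|w k|)%:E)%E.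
Proof.
rewrite wsumE -sumEFin; apply: eq_bigr => k _; by rewrite diracT mule1.
Qed.

Lemma wprobE (w : nat -> R) (a : nat -> T) J (h1 : \sum_(k < J) `|w k| = 1) :
  forall A, wprob w a J A = msum (wm w a) J A.
Proof.
have E1 : msum (wm w a) J [set: T] = 1%E by rewrite wsumT h1.
move=> A; rewrite /wprob /=; unfold mnormalize; cbv zeta.
set ev := (X in if (X == 0)%E || _ then _ else _).
have -> : ev = 1%E by exact: E1.
rewrite onee_eq0 /=.
set ev2 := (X in if (X == +oo)%E then _ else _).
have -> : ev2 = 1%E by exact: E1.
set ev3 := (X in fine X).
have -> : ev3 = 1%E by exact: E1.
by rewrite /= invr1 mule1.
Qed.

Lemma wprob_int (w : nat -> R) (a : nat -> T) J (g : T -> R) : \sum_(k < J) `|w k| = 1 ->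
  measurable_fun [set: T] g ->
  Rintegral (wprob w a J) [set: T] g = \sum_(k < J) `|w k| * g (a k).
Proof.
move=> h1 mg; rewrite /Rintegral (@eq_measure_integral _ _ _ _ (msum (wm w a) J)).
  by rewrite wsum_int.
by move=> A _ _; exact: wprobE.
Qed.

Lemma wprob_push (w : nat -> R) (a : nat -> T) J (h : T -> T) A : \sum_(k < J) `|w k| = 1 ->
  wprob w (h \o a) J A = wprob w a J (h @^-1` A).
Proof.
move=> h1; rewrite !wprobE // !wsumE; exact: eq_bigr.
Qed.

Lemma PM_fin (mu : PM) (A : set T) : measurable A -> mu A \is a fin_num.
Proof. by move=> mA; rewrite fin_num_measure. Qed.

Lemma step_int (mu : PM) L (A : nat -> set T) (phi : nat -> R) :
  (forall l, measurable (A l)) ->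
  Rintegral mu [set: T] (fun x => \sum_(l < L) phi l * \1_(A l) x) =
  \sum_(l < L) phi l * fine (mu (A l)).
Proof.
move=> mA; rewrite /Rintegral.
under eq_integral do rewrite -sumEFin.
rewrite integral_sum //; last first.
  move=> l; under eq_fun do rewrite EFinM.
  exact/integrableZl/integrable_indic.
rewrite (_ : (\sum_(i < L) _)%E = (\sum_(l < L) (phi l * fine (mu (A l)))%:E)%E).
  by rewrite sumEFin.
apply: eq_bigr => l _.
under eq_integral do rewrite EFinM.
rewrite integralZl //; last exact: integrable_indic.
by rewrite integral_indic // setIT EFinM fineK // PM_fin.
Qed.

Lemma nb_open K (g : 'I_K -> X -> R) (e : R) (x : X) :
  (forall k, continuous (g k)) -> 0 < e ->
  exists N : set X, [/\ open N, N x & forall y, N y -> forall k, `|g k y - g k x| < e].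
Proof.
move=> cg e0.
exists (interior [set y | forall k, `|g k y - g k x| < e]); split.
- exact: open_interior.
- rewrite /interior /=; apply: filter_forall => k.
  apply: filterS (cvgr_dist_lt (g k) (g k x) (cg k x) e e0) => y /=.
  by rewrite distrC.
- by move=> y /interior_subset.
Qed.

Lemma cover_fin (N : X -> set X) : compact [set: X] ->
  (forall x, open (N x) /\ N x x) ->
  exists L (c : nat -> X), forall y, exists l, (l < L)%N /\ N (c l) y.
Proof.
rewrite compact_cover => cX hN.
have [D' _ cov] := cX X [set: X] N (fun x _ => (hN x).1)
  (fun y _ => ex_intro2 _ _ y I (hN y).2).
exists (size (finmap.enum_fset D')), (fun l => nth point (finmap.enum_fset D') l).
move=> y; have [i Di Niy] := cov y I.
exists (index i (finmap.enum_fset D')); split.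
  by rewrite index_mem.
by rewrite nth_index.
Qed.

Lemma PM_int (mu : PM) (h : T -> R) M : measurable_fun [set: T] h ->
  (forall x, `|h x| <= M) -> mu.-integrable [set: T] (EFin \o h).
Proof.
move=> mh hM; apply: measurable_bounded_integrable => //.
  by rewrite -ge0_fin_numE // PM_fin.
exact: bnd_of_le hM.
Qed.

Lemma PM_setT (mu : PM) : mu [set: T] = 1%E.
Proof. exact: probability_setT. Qed.

Lemma PM_lt (mu : PM) : (mu [set: T] < +oo)%E.
Proof. by rewrite -ge0_fin_numE // PM_fin. Qed.

Definition Aset (Nf : X -> set X) (c : nat -> X) (l : nat) : set T :=
  (Nf (c l) : set T) `&` \bigcap_(j : nat) (if (j < l)%N then ~` (Nf (c j) : set T) else [set: T]).

Lemma Aset_meas Nf c l : (forall x, open (Nf x)) -> measurable (Aset Nf c l).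
Proof.
move=> oN; apply: measurableI; first exact: open_measT.
apply: bigcapT_measurable => j; case: ifP => _ //.
by apply: measurableC; exact: open_measT.
Qed.

Lemma Aset_point Nf c L (x : T) : (exists l, (l < L)%N /\ Nf (c l) x) ->
  exists l0, (l0 < L)%N /\ Nf (c l0) x /\
    forall phi : nat -> R, \sum_(l < L) phi l * \1_(Aset Nf c l) x = phi l0.
Proof.
move=> [l1 [l1L Hl1]].
pose P := fun l => (l < L)%N && `[< Nf (c l) x >].
have exP : exists l, P l by exists l1; rewrite /P l1L /=; exact/asboolP.
case: (ex_minnP exP) => l0 /andP[l0L /asboolP Hl0] minl0.
have notj : forall j, (j < l0)%N -> ~ Nf (c j) x.
  move=> j jl0 Nj; have : P j by rewrite /P (ltn_trans jl0 l0L) /=; exact/asboolP.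
  by move/minl0; rewrite leqNgt jl0.
exists l0; split => //; split => // phi.
rewrite (bigD1 (Ordinal l0L)) //= big1 ?addr0.
  rewrite indicE mem_set ?mulr1 //; split => //.
  by move=> j _ /=; case: ifP => // jl; exact: notj.
move=> [l lL] /= /eqP hl; rewrite indicE memNset ?mulr0 //.
move=> [Nl Hb]; have [ll0|l0l|] := ltngtP l l0.
- by move: (minl0 l); rewrite /P lL /= leqNgt ll0 => /(_ (asboolT Nl)).
- by have := Hb l0 I; rewrite /= l0l; apply.
- by move=> ee; apply: hl; apply: val_inj.
Qed.

Lemma approx (rho : PM) K (g : 'I_K -> X -> R) (e : R) :
  compact [set: X] -> (forall k, continuous (g k)) -> 0 < e ->
  exists L (O : nat -> set X) (w : nat -> R),
    [/\ forall l, open (O l) /\ O l !=set0,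
        \sum_(l < L) `|w l| = 1 &
        forall a : nat -> X, (forall l, (l < L)%N -> O l (a l)) ->
          forall k, `| \sum_(l < L) `|w l| * g k (a l) - Rintegral rho [set: T] (g k) | <= e].
Proof.
move=> cX cg e0.
have e20 : 0 < e / 2 by rewrite divr_gt0.
have /choice [Nf hN] : forall x, exists N : set X,
    [/\ open N, N x & forall y, N y -> forall k, `|g k y - g k x| < e / 2].
  by move=> x; exact: nb_open.
have [L [c cov]] := @cover_fin Nf cX (fun x => let: And3 o h _ := hN x in conj o h).
have oN : forall x, open (Nf x) by move=> x; case: (hN x).
pose A := Aset Nf c.
have mA : forall l, measurable (A l) by move=> l; exact: Aset_meas.
pose w := fun l => fine (rho (A l)).
have w0 : forall l, 0 <= w l by move=> l; apply: fine_ge0.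
have pt := fun x => @Aset_point Nf c L x (cov x).
have gM : forall k, exists M, forall x, `|g k x| <= M.
  by move=> k; exact: (cont_bnd cX (cg k)).
exists L, (fun l => Nf (c l)), w; split.
- by move=> l; split => //; exists (c l); case: (hN (c l)).
- under eq_bigr do rewrite ger0_norm //.
  rewrite (eq_bigr (fun l : 'I_L => 1 * fine (rho (A l)))); last first.
    by move=> l _; rewrite mul1r.
  have E := step_int rho L (fun=> 1) mA; simpl in E; rewrite -E.
  rewrite (_ : (fun x => _) = (fun=> 1)); last first.
    apply/funext => x; have [l0 [_ [_ H]]] := pt x; exact: (H (fun=> 1)).
  rewrite Rintegral_cst // mul1r (_ : fine _ = fine 1%E) //; congr fine; exact: PM_setT.
move=> a Ha k.
have [M HM] := gM k.
pose s := fun x => \sum_(l < L) g k (a l) * \1_(A l) x.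
have sE : \sum_(l < L) `|w l| * g k (a l) = Rintegral rho [set: T] s.
  have E := step_int rho L (fun l => g k (a l)) mA; simpl in E; rewrite /s E.
  by apply: eq_bigr => l _; rewrite ger0_norm // mulrC.
have ms : measurable_fun [set: T] s.
  apply: measurable_sum => l; apply: measurable_funM => //.
have mg : measurable_fun [set: T] (g k : T -> R) by exact: cont_measT.
have sM : forall x, `|s x| <= M.
  move=> x; have [l0 [_ [_ H]]] := pt x.
  by rewrite /s (H (fun l => g k (a l))).
have si := PM_int rho ms sM.
have gi := PM_int rho mg HM.
have sgM : forall x, `|s x - g k x| <= e.
  move=> x; have [l0 [l0L [Nx H0]]] := pt x.
  rewrite /s (H0 (fun l => g k (a l))).
  have [_ _ H] := hN (c l0).
  rewrite -(subrKA (g k (c l0))) (le_trans (ler_normD _ _)) //.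
  rewrite [e](splitr e) lerD // ltW //; first exact: (H _ (Ha l0 l0L) k).
  by rewrite distrC; apply: H.
rewrite sE -RintegralB //.
have dM : forall x, `|s x - g k x| <= M + M.
  by move=> x; rewrite (le_trans (ler_normB _ _)) // lerD.
have mB : measurable_fun [set: T] (fun x => s x - g k x) := measurable_funB ms mg.
have di := PM_int rho mB dM.
have mN : measurable_fun [set: T] (fun x => `|s x - g k x|).
  by apply: measurableT_comp; [exact: normr_measurable | exact: mB].
have ni : rho.-integrable [set: T] (EFin \o (fun x => `|s x - g k x|)).
  by apply: (PM_int rho mN (M := M + M)) => x; rewrite normr_id.
have ci : rho.-integrable [set: T] (EFin \o (fun _ : T => e)).
  by apply: (PM_int rho (measurable_cst _) (M := `|e|)).
apply: le_trans (le_normr_Rintegral measurableT di) _.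
apply: le_trans (le_Rintegral measurableT ni ci (fun x _ => sgM x)) _.
rewrite Rintegral_cst // (_ : fine _ = fine 1%E) ?mulr1 //; congr fine; exact: PM_setT.
Qed.

Definition lprob (s : seq (R * T)) : PM :=
  wprob (fun k => (nth (0, point) s k).1) (fun k => (nth (0, point) s k).2) (size s).

Lemma lsum (s : seq (R * T)) (F : R * T -> R) :
  \sum_(k < size s) F (nth (0, point) s k) = \sum_(p <- s) F p.
Proof. by rewrite (big_nth (0, point)) big_mkord. Qed.

Lemma lsumE (s : seq (R * T)) (F : R * T -> \bar R) :
  (\sum_(k < size s) F (nth (0%R, point) s k) = \sum_(p <- s) F p)%E.
Proof. by rewrite (big_nth (0%R, point)) big_mkord. Qed.

Lemma lprobE (s : seq (R * T)) : \sum_(p <- s) `|p.1| = 1 ->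
  forall A, lprob s A = (\sum_(p <- s) `|p.1|%:E * \d_(p.2) A)%E.
Proof.
move=> h1 A; rewrite /lprob wprobE ?wsumE.
  exact: (lsumE s (fun p => `|p.1|%:E * \d_(p.2) A)%E).
exact: (etrans (lsum s (fun p => `|p.1|)) h1).
Qed.

Lemma lprob_int (s : seq (R * T)) (g : T -> R) : \sum_(p <- s) `|p.1| = 1 ->
  measurable_fun [set: T] g ->
  Rintegral (lprob s) [set: T] g = \sum_(p <- s) `|p.1| * g p.2.
Proof.
move=> h1 mg; rewrite /lprob wprob_int //.
  exact: (lsum s (fun p => `|p.1| * g p.2)).
exact: (etrans (lsum s (fun p => `|p.1|)) h1).
Qed.

End Infra.

Lemma wm_fin {Y : Type} (op : set (set Y)) (img : nat -> set Y -> set Y) :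
  weakly_mixing_all_orders op img ->
  forall (I : finType) (U V : I -> set Y),
    (forall i, op (U i) /\ U i !=set0) -> (forall i, op (V i) /\ V i !=set0) ->
    exists n, (0 < n)%N /\ forall i, img n (U i) `&` V i !=set0.
Proof.
move=> wm I U V hU hV.
case: (pickP (@predT I)) => [i0 _|I0]; last first.
  by exists 1%N; split => // i; have := I0 i.
have := wm (#|I|.+2) isT (fun j => U (nth i0 (enum I) j))
  (fun j => V (nth i0 (enum I) j)) (fun j => hU _) (fun j => hV _).
move=> [n [n0 H]]; exists n; split => // i.
have iI : (index i (enum I) < #|I|.+2)%N.
  apply: (@ltn_trans #|I|); last by rewrite ltnS leqnSn.
  by rewrite cardE index_mem mem_enum.
have := H (Ordinal iI); rewrite /= nth_index // mem_enum //.
Qed.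

Section Local.
Variables (R : realType) (X : pseudoPMetricType R).
Local Notation T := (@borelX R X).

Lemma conv_bound (L J : nat) (w u : nat -> R) (G : nat -> nat -> R) (I e : R) :
  \sum_(j < J) `|u j| = 1 ->
  (forall j, (j < J)%N -> `|\sum_(l < L) `|w l| * G j l - I| <= e) ->
  `|\sum_(l < L) \sum_(j < J) (`|w l| * `|u j|) * G j l - I| <= e.
Proof.
move=> u1 H.
rewrite exchange_big /=.
rewrite (eq_bigr (fun j : 'I_J => `|u j| * \sum_(l < L) `|w l| * G j l)); last first.
  move=> j _; rewrite mulr_sumr; apply: eq_bigr => l _.
  by rewrite mulrA (mulrC `|u j|).
rewrite -[X in _ - X]mul1r -u1 mulr_suml -sumrB.
rewrite (eq_bigr (fun j : 'I_J => `|u j| * (\sum_(l < L) `|w l| * G j l - I))); last first.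
  by move=> j _; rewrite mulrBr.
apply: le_trans (ler_norm_sum _ _ _) _.
rewrite -[e]mul1r -u1 mulr_suml; apply: ler_sum => j _.
by rewrite normrM normr_id ler_wpM2l // H.
Qed.

Lemma local_data (W : set (@PM R X)) (rho : PM) : compact [set: X] ->
  weak_star_open W -> W rho ->
  exists L (O : nat -> set X) (w : nat -> R),
   [/\ forall l, open (O l) /\ O l !=set0, \sum_(l < L) `|w l| = 1 &
     forall J (u : nat -> R) (b : nat -> nat -> X), \sum_(j < J) `|u j| = 1 ->
       (forall j l, (j < J)%N -> (l < L)%N -> O l (b j l)) ->
       W (lprob [seq ((`|w l| * `|u j|)%R, (b j l : T)) | l <- index_iota 0 L, j <- index_iota 0 J])].
Proof.
move=> cX oW Wr; have [K [g [e [e0 [cg HW]]]]] := oW rho Wr.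
have e20 : 0 < e / 2 by rewrite divr_gt0.
have [L [Os [w [hO w1 Ha]]]] := approx rho cX cg e20.
exists L, Os, w; split => // J u b u1 hb.
have s1 : \sum_(p <- [seq ((`|w l| * `|u j|)%R, (b j l : T)) | l <- index_iota 0 L, j <- index_iota 0 J]) `|p.1| = 1.
  rewrite big_allpairs_dep /= big_mkord.
  rewrite (eq_bigr (fun l : 'I_L => `|w l| * \sum_(j < J) `|u j|)); last first.
    move=> l _; rewrite big_mkord mulr_sumr; apply: eq_bigr => j _.
    by rewrite normrM !normr_id.
  by rewrite -mulr_suml u1 mulr1 w1.
apply: HW => kk.
rewrite lprob_int //; last exact: cont_measT.
rewrite big_allpairs_dep /= big_mkord.
rewrite (eq_bigr (fun l : 'I_L => \sum_(j < J) (`|w l| * `|u j|) * g kk (b j l))); last first.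
  move=> l _; rewrite big_mkord; apply: eq_bigr => j _.
  by rewrite normrM !normr_id.
have CB := @conv_bound L J w u (fun j l => g kk (b j l)) (\int[rho]_x g kk x) (e / 2) u1.
apply: (le_lt_trans (CB _)).
  by move=> j jJ; apply: Ha => l lL; exact: hb.
by rewrite [X in _ < X](splitr e) ltrDl.
Qed.

Lemma ury (x : X) (U : set X) : open U -> U x ->
  exists h : X -> R, [/\ continuous h, h x = 0, (forall y, ~ U y -> h y = 1) &
    (forall y, 0 <= h y)].
Proof.
move=> oU Ux.
have sep := @point_uniform_separator R X x (~` U) (open_closedC oU) (fun H => H Ux).
exists (Urysohn [set x] (~` U)); split.
- exact: Urysohn_continuous.
- by apply: (Urysohn_sub0 sep); exists x.
- by move=> y nUy; apply: (Urysohn_sub1 sep); exists y.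
- move=> y; have := @Urysohn_range X R [set x] (~` U) (Urysohn [set x] (~` U) y).
  by move=> /(_ (ex_intro2 _ _ y I erefl)); rewrite /= in_itv /= => /andP[].
Qed.

Lemma meas_le_int (mu : PM) (h : X -> R) (B : set X) :
  compact [set: X] -> measurable (B : set T) -> continuous h ->
  (forall y, 0 <= h y) -> (forall y, B y -> 1 <= h y) ->
  (mu B <= (Rintegral mu [set: T] h)%:E)%E.
Proof.
move=> cX mB ch h0 hB.
have hi := cont_int cX ch (PM_lt mu).
rewrite /Rintegral fineK; last exact: integrable_fin_num.
apply: (@le_trans _ _ (\int[mu]_x (\1_(B : set T) x)%:E)%E).
  by rewrite integral_indic // setIT.
apply: ge0_le_integral => //.
- by apply/measurable_EFinP; exact: measurable_indic.
- by apply/measurable_EFinP; exact: cont_measT.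
- move=> y _; rewrite lee_fin indicE; case: (boolP (y \in B)) => [/set_mem/hB|] //=.
Qed.

End Local.

Lemma fcomp_cont {X : topologicalType} (f : nat -> X -> X) :
  (forall n, (0 < n)%N -> continuous (f n)) -> forall n, continuous (fcomp f n).
Proof.
move=> hf; elim => [|n IH] x /=; first exact: cvg_id.
apply: continuous_comp; first exact: IH.
exact: hf.
Qed.

Lemma aux_lt (R : realType) (a b : R) : `|a - b| < 2^-1 - b -> a < 2^-1.
Proof. move=> H; have := ler_norm (a - b); lra. Qed.

Lemma aux_sum (R : realType) (a b : R) : 1 <= a + b -> a < 2^-1 -> b < 2^-1 -> False.
Proof. lra. Qed.

Lemma bwd (R : realType) (X : pseudoPMetricType R) (f : nat -> X -> X) :
  compact [set: X] -> (forall n : nat, (0 < n)%N -> continuous (f n)) ->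
  weakly_mixing_all_orders (@weak_star_open R X) (induced_img f) ->
  weakly_mixing_all_orders (@open X) (fun n U => fcomp f n @` U).
Proof.
move=> cX hf wmM m m2 U V hU hV.
have /choice [xu hxu] : forall i, exists x, U i x.
  by move=> i; case: (hU i) => _ [x ?]; exists x.
have /choice [yv hyv] : forall i, exists x, V i x.
  by move=> i; case: (hV i) => _ [x ?]; exists x.
have /choice [h hh] := fun i => ury (hU i).1 (hxu i).
have /choice [k hk] := fun i => ury (hV i).1 (hyv i).
pose S (q : X -> R) := [set mu : @PM R X | Rintegral mu [set: @borelX R X] q < 2^-1].
have openS : forall q, continuous q -> weak_star_open (S q).
  move=> q cq mu Hmu; exists 1%N, (fun _ => q), (2^-1 - Rintegral mu [set: @borelX R X] q).
  split; first by rewrite subr_gt0.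
  split => // nu Hnu; exact: aux_lt (Hnu ord0).
have neS : forall q x, continuous q -> q x = 0 -> S q !=set0.
  move=> q x cq qx; exists (lprob [:: (1, (x : @borelX R X))]).
  rewrite /S /= lprob_int ?big_seq1 ?normr1 ?mul1r //=; last exact: cont_measT.
  by rewrite qx invr_gt0 ltr0n.
have [n [n0 Hn]] := wmM m m2 (fun i => S (h i)) (fun i => S (k i))
  (fun i => let: And4 c0 c1 _ _ := hh i in conj (openS _ c0) (neS _ _ c0 c1))
  (fun i => let: And4 c0 c1 _ _ := hk i in conj (openS _ c0) (neS _ _ c0 c1)).
exists n; split => // i.
have [nu [[mu Smu Hpush] Snu]] := Hn i.
have [//|Hne] := pselect ((fcomp f n @` U i `&` V i) !=set0).
exfalso.
pose F := fcomp f n.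
have cF : continuous F := fcomp_cont hf (n:=n).
have disj : forall x, U i x -> ~ V i (F x).
  by move=> x Ux Vx; apply: Hne; exists (F x); split => //; exists x.
have [ch h0x h1 hpos] := hh i.
have [ck k0x k1 kpos] := hk i.
have mU : measurable (~` U i : set (@borelX R X)).
  by apply: measurableC; apply: open_measT; exact: (hU i).1.
have oFV : open (F @^-1` V i) by move: cF => /continuousP; apply; exact: (hV i).1.
have mFV : measurable (~` (F @^-1` V i) : set (@borelX R X)).
  by apply: measurableC; exact: open_measT.
have mV : measurable (~` V i : set (@borelX R X)).
  by apply: measurableC; apply: open_measT; exact: (hV i).1.
have b1 := meas_le_int mu cX mU ch hpos (fun y nUy => ltac:(by rewrite (h1 y nUy))).
have b2 := meas_le_int nu cX mV ck kpos (fun y nVy => ltac:(by rewrite (k1 y nVy))).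
have e2 : nu (~` V i) = mu (~` (F @^-1` V i)) by rewrite Hpush.
have cov : [set: @borelX R X] = ~` U i `|` ~` (F @^-1` V i).
  apply/seteqP; split => x // _.
  by case: (pselect (U i x)) => Ux; [right => /= /(disj _ Ux)|left].
have : (1 <= (Rintegral mu [set: @borelX R X] (h i))%:E + (Rintegral nu [set: @borelX R X] (k i))%:E)%E.
  apply: (@le_trans _ _ (mu (~` U i `|` ~` (F @^-1` V i)))).
    by rewrite -cov PM_setT.
  apply: le_trans (measureU2 _ mU mFV) _.
  have b2' := b2; rewrite e2 in b2'.
  exact: leeD b1 b2'.
rewrite -EFinD lee_fin => H; exact: aux_sum H Smu Snu.
Qed.

Lemma prod_list_sum (R : realType) (X : pseudoPMetricType R) L J (w u : nat -> R)
  (b : nat -> nat -> @borelX R X) :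
  \sum_(l < L) `|w l| = 1 -> \sum_(j < J) `|u j| = 1 ->
  \sum_(p <- [seq ((`|w l| * `|u j|)%R, b j l) | l <- index_iota 0 L, j <- index_iota 0 J]) `|p.1| = 1.
Proof.
move=> w1 u1; rewrite big_allpairs_dep /= big_mkord.
rewrite (eq_bigr (fun l : 'I_L => `|w l| * \sum_(j < J) `|u j|)); last first.
  move=> l _; rewrite big_mkord mulr_sumr; apply: eq_bigr => j _.
  by rewrite normrM !normr_id.
by rewrite -mulr_suml u1 mulr1 w1.
Qed.

Lemma push_list (R : realType) (X : pseudoPMetricType R) L J (w u : nat -> R)
  (b : nat -> nat -> @borelX R X) (F : @borelX R X -> @borelX R X) :
  \sum_(l < L) `|w l| = 1 -> \sum_(j < J) `|u j| = 1 ->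
  forall A, lprob [seq ((`|u j| * `|w l|)%R, F (b j l)) | j <- index_iota 0 J, l <- index_iota 0 L] A =
  lprob [seq ((`|w l| * `|u j|)%R, b j l) | l <- index_iota 0 L, j <- index_iota 0 J] (F @^-1` A).
Proof.
move=> w1 u1 A.
rewrite !lprobE; last 2 first.
- exact: prod_list_sum.
- exact: prod_list_sum.
rewrite !big_allpairs_dep /= exchange_big /=.
apply: eq_bigr => l _; apply: eq_bigr => j _.
by rewrite mulrC.
Qed.

Lemma fwd (R : realType) (X : pseudoPMetricType R) (f : nat -> X -> X) :
  compact [set: X] -> (forall n : nat, (0 < n)%N -> continuous (f n)) ->
  weakly_mixing_all_orders (@open X) (fun n U => fcomp f n @` U) ->
  weakly_mixing_all_orders (@weak_star_open R X) (induced_img f).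
Proof.
move=> cX hf wmX m m2 UU VV hUU hVV.
have /choice [dU hdU] : forall i, exists d : nat * (nat -> set X) * (nat -> R),
   [/\ forall l, open (d.1.2 l) /\ d.1.2 l !=set0, \sum_(l < d.1.1) `|d.2 l| = 1 &
     forall J (u : nat -> R) (b : nat -> nat -> X), \sum_(j < J) `|u j| = 1 ->
       (forall j l, (j < J)%N -> (l < d.1.1)%N -> d.1.2 l (b j l)) ->
       UU i (lprob [seq ((`|d.2 l| * `|u j|)%R, (b j l : @borelX R X)) | l <- index_iota 0 d.1.1, j <- index_iota 0 J])].
  move=> i; have [rho Hr] := (hUU i).2; have [L [Os [w H]]] := local_data cX (hUU i).1 Hr.
  by exists (L, Os, w).
have /choice [dV hdV] : forall i, exists d : nat * (nat -> set X) * (nat -> R),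
   [/\ forall l, open (d.1.2 l) /\ d.1.2 l !=set0, \sum_(l < d.1.1) `|d.2 l| = 1 &
     forall J (u : nat -> R) (b : nat -> nat -> X), \sum_(j < J) `|u j| = 1 ->
       (forall j l, (j < J)%N -> (l < d.1.1)%N -> d.1.2 l (b j l)) ->
       VV i (lprob [seq ((`|d.2 l| * `|u j|)%R, (b j l : @borelX R X)) | l <- index_iota 0 d.1.1, j <- index_iota 0 J])].
  move=> i; have [rho Hr] := (hVV i).2; have [L [Os [w H]]] := local_data cX (hVV i).1 Hr.
  by exists (L, Os, w).
pose N := \max_(i < m) ((dU i).1.1 + (dV i).1.1).
have LUN : forall i, ((dU i).1.1 <= N)%N.
  by move=> i; apply: leq_trans (leq_addr _ _) (leq_bigmax i).
have LVN : forall i, ((dV i).1.1 <= N)%N.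
  by move=> i; apply: leq_trans (leq_addl _ _) (leq_bigmax i).
pose Ut := fun t : 'I_m * 'I_N.+1 * 'I_N.+1 =>
  if ((t.1.2 : nat) < (dU t.1.1).1.1)%N && ((t.2 : nat) < (dV t.1.1).1.1)%N
  then (dU t.1.1).1.2 t.1.2 else [set: X].
pose Vt := fun t : 'I_m * 'I_N.+1 * 'I_N.+1 =>
  if ((t.1.2 : nat) < (dU t.1.1).1.1)%N && ((t.2 : nat) < (dV t.1.1).1.1)%N
  then (dV t.1.1).1.2 t.2 else [set: X].
have hUt : forall t, open (Ut t) /\ Ut t !=set0.
  move=> t; rewrite /Ut; case: ifP => _; last by split; [exact: openT | exists point].
  by have [+ _ _] := hdU t.1.1; apply.
have hVt : forall t, open (Vt t) /\ Vt t !=set0.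
  move=> t; rewrite /Vt; case: ifP => _; last by split; [exact: openT | exists point].
  by have [+ _ _] := hdV t.1.1; apply.
have [n [n0 Hn]] := wm_fin wmX hUt hVt.
pose F := fcomp f n.
have /choice [pt hpt] : forall t, exists x, Ut t x /\ Vt t (F x).
  by move=> t; have [y [[x Ux <-] Vy]] := Hn t; exists x.
pose ptn := fun i l k => pt (i, inord l, inord k).
have Hptn : forall i l k, (l < (dU i).1.1)%N -> (k < (dV i).1.1)%N ->
    (dU i).1.2 l (ptn i l k) /\ (dV i).1.2 k (F (ptn i l k)).
  move=> i l k lL kL; have [] := hpt (i, inord l, inord k).
  have lN : (l < N.+1)%N by rewrite ltnS (leq_trans (ltnW lL)).
  have kN : (k < N.+1)%N by rewrite ltnS (leq_trans (ltnW kL)).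
  by rewrite /Ut /Vt /= !inordK // lL kL /=.
exists n; split => // i.
have [_ wU1 HU] := hdU i.
have [_ wV1 HV] := hdV i.
set mu' := lprob [seq ((`|(dU i).2 l| * `|(dV i).2 k|)%R, (ptn i l k : @borelX R X))
   | l <- index_iota 0 (dU i).1.1, k <- index_iota 0 (dV i).1.1].
set nu' := lprob [seq ((`|(dV i).2 k| * `|(dU i).2 l|)%R, (F (ptn i l k) : @borelX R X))
   | k <- index_iota 0 (dV i).1.1, l <- index_iota 0 (dU i).1.1].
exists nu'; split.
  exists mu'.
    apply: (HU _ _ (fun k l => ptn i l k)) => // k l kL lL.
    by have [] := Hptn i l k lL kL.
  move=> A mA.
  exact: (@push_list R X _ _ _ _ (fun k l => ptn i l k) F wU1 wV1 A).
apply: (HV _ _ (fun l k => F (ptn i l k))) => // l k lL kL.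
by have [] := Hptn i l k lL kL.
Qed.

Unset Implicit Arguments.

Theorem theorem3p5 (R : realType) (X : pseudoPMetricType R)
  (f : nat -> X -> X) :
  hausdorff_space X -> compact [set: X] ->
  (forall n : nat, (0 < n)%N -> continuous (f n)) ->
  (weakly_mixing_all_orders (@open X) (fun n U => fcomp f n @` U) <->
   weakly_mixing_all_orders (@weak_star_open R X) (induced_img f)).
Proof.
move=> _ cX hf; split; [exact: fwd | exact: bwd].
Qed.
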